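(* Let $n,g,k,t$ be positive integers with $t\le k$. If there exist an orthogonal array OA$(t,k,g)$ and a large set with multiplicity LS$(t,k,n;g^{k-t})$, then there exists a large set of H-designs LH$(n,g,k,t)$.
   Context: A Steiner system S$(t,k,n)$ is a pair $(Q,B)$ where $Q$ is an $n$-set and $B$ is a collection of $k$-subsets (blocks) of $Q$ such that every $t$-subset of $Q$ is contained in exactly one block. A large set with multiplicity $\mu$, LS$(t,k,n;\mu)$, is a family (the same system may occur more than once) of Steiner systems S$(t,k,n)$ on a common $n$-set $Q$ such that every $k$-subset of $Q$ is a block of exactly $\mu$ of the systems. An orthogonal array OA$(t,k,g)$ is a $g^t\times k$ matrix with entries from $\mathbb{Z}_g$ such that in the submatrix formed by any $t$ columns each ordered $t$-tuple over $\mathbb{Z}_g$ occurs exactly once as a row. An H-design H$(n,g,k,t)$ is a triple $(Q,G,B)$ where $Q$ is a set of $ng$ points, $G$ is a partition of $Q$ into $n$ groups of size $g$, and $B$ is a set of $k$-subsets of $Q$ (blocks) such that each block meets each group in at most one point and any $t$ points from $t$ distinct groups lie in exactly one block. A large set of H-designs LH$(n,g,k,t)$ is a partition of the set of all $k$-subsets of $Q$ meeting each group in at most one point into pairwise disjoint block sets, each forming an H-design H$(n,g,k,t)$ with the same $Q$ and $G$. *)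

(* Defs.v *)
From mathcomp Require Import all_boot.
Unset Printing Implicit Defensive.

Definition steiner_system (t k n : nat) (B : {set {set 'I_n}}) : Prop :=
  (forall b, b \in B -> #|b| = k) /\
  (forall T : {set 'I_n}, #|T| = t -> #|[set b in B | T \subset b]| = 1).

(* LS(t,k,n;mu): a family (repetitions allowed, hence a list) of Steiner
   systems S(t,k,n) on the common n-set 'I_n such that every k-subset is a
   block of exactly mu of the systems. *)
Definition large_set_mult (t k n mu : nat) (L : seq {set {set 'I_n}}) : Prop :=
  (forall B, B \in L -> steiner_system t k n B) /\
  (forall K : {set 'I_n}, #|K| = k -> count (fun B : {set {set 'I_n}} => K \in B) L = mu).

(* OA(t,k,g): a g^t x k matrix with entries in Z_g (represented by 'I_g) such
   that, for any t (distinct, ordered) columns, each ordered t-tuple over Z_g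
   occurs exactly once as a row of the corresponding submatrix. *)
Definition orthogonal_array (t k g : nat) (M : 'I_(g ^ t) -> 'I_k -> 'I_g) : Prop :=
  forall (c : {ffun 'I_t -> 'I_k}), injective c ->
  forall (v : 'I_t -> 'I_g),
    #|[set r : 'I_(g ^ t) | [forall i : 'I_t, M r (c i) == v i]]| = 1.

Definition transverse (T : finType) (G : {set {set T}}) (S : {set T}) : bool :=
  [forall X in G, #|S :&: X| <= 1].

Definition hgroups (T : finType) (n g : nat) (G : {set {set T}}) : Prop :=
  #|T| = n * g /\ partition G [set: T] /\ #|G| = n /\
  (forall X, X \in G -> #|X| = g).

Definition H_design (T : finType) (n g k t : nat) (G : {set {set T}})
    (B : {set {set T}}) : Prop :=
  hgroups T n g G /\
  (forall b, b \in B -> #|b| = k /\ transverse T G b) /\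
  (forall S : {set T}, #|S| = t -> transverse T G S ->
     #|[set b in B | S \subset b]| = 1).

Definition transverse_ksets (T : finType) (k : nat) (G : {set {set T}})
  : {set {set T}} := [set K : {set T} | (#|K| == k) && transverse T G K].

Definition large_set_H (T : finType) (n g k t : nat) (G : {set {set T}})
    (P : {set {set {set T}}}) : Prop :=
  hgroups T n g G /\
  partition P (transverse_ksets T k G) /\
  (forall B, B \in P -> H_design T n g k t G B).

(* Main.v *)
Require Import Defs.
From mathcomp Require Import all_boot all_algebra zify.
Set Implicit Arguments. Unset Strict Implicit. Unset Printing Implicit Defensive.
Import GRing.Theory.

Lemma card_set_nth (X : Type) (s : seq X) (a : pred X) x0 :
  #|[set j : 'I_(size s) | a (nth x0 s j)]| = count a s.
Proof.
by rewrite -sum1dep_card -sum1_count (big_nth x0) big_mkord.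
Qed.

Section PA.
Variables (t k g' : nat) (ht : t <= k).
Local Notation G1 := g'.+1.
Variable M : 'I_(G1 ^ t) -> 'I_k -> 'I_G1.
Hypothesis OA : forall (c : {ffun 'I_t -> 'I_k}), injective c ->
  forall (v : 'I_t -> 'I_G1),
    #|[set r : 'I_(G1 ^ t) | [forall i : 'I_t, M r (c i) == v i]]| = 1.

Definition W := {ffun 'I_(k - t) -> 'I_G1}.

Definition shift (w : W) (i : 'I_k) : 'I_G1 :=
  if t <= i then (if insub (i - t) is Some j then w j else 0%R) else 0%R.

Lemma pos_proof (j : 'I_(k - t)) : t + j < k.
Proof. have := ltn_ord j; lia. Qed.
Definition pos (j : 'I_(k - t)) : 'I_k := Ordinal (pos_proof j).

Lemma shift_pos w j : shift w (pos j) = w j.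
Proof.
rewrite /shift /= leq_addr addKn.
case: insubP => [j' _ Hj'|]; last by rewrite ltn_ord.
by congr (w _); apply: ord_inj.
Qed.

Lemma shift_lt w (i : 'I_k) : i < t -> shift w i = 0%R.
Proof. by rewrite /shift ltnNge => /negbTE ->. Qed.

Definition c0 : {ffun 'I_t -> 'I_k} := [ffun m => widen_ord ht m].
Lemma c0_inj : injective c0.
Proof. by move=> a b; rewrite !ffunE => /(congr1 val) /= /val_inj. Qed.

Definition vecOf (w : W) (r : 'I_(G1 ^ t)) : {ffun 'I_k -> 'I_G1} :=
  [ffun i => (M r i + shift w i)%R].

Definition cls (w : W) : {set {ffun 'I_k -> 'I_G1}} :=
  [set vecOf w r | r : 'I_(G1 ^ t)].

Lemma OA_uniq (c : {ffun 'I_t -> 'I_k}) (ci : injective c) r r' :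
  (forall m, M r (c m) = M r' (c m)) -> r = r'.
Proof.
move=> H.
have := OA ci (fun m => M r (c m)).
move/eqP/cards1P => [x Hx].
have : r \in [set x] by rewrite -Hx inE; apply/forallP => m.
have : r' \in [set x] by rewrite -Hx inE; apply/forallP => m; rewrite H.
by rewrite !inE => /eqP -> /eqP ->.
Qed.

Lemma OA_ex (c : {ffun 'I_t -> 'I_k}) (ci : injective c) (u : 'I_t -> 'I_G1) : exists r, forall m, M r (c m) = u m.
Proof.
have := OA ci u.
move/eqP/cards1P => [x Hx].
have : x \in [set x] by rewrite inE.
by rewrite -Hx inE => /forallP H; exists x => m; apply/eqP.
Qed.

Lemma cls_cover v : exists w, v \in cls w.
Proof.
have [r Hr] := OA_ex c0_inj (fun m => v (c0 m)).
exists [ffun j => (v (pos j) - M r (pos j))%R].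
apply/imsetP; exists r => //; apply/ffunP => i; rewrite ffunE.
case: (ltnP i t) => Hi.
  rewrite shift_lt // addr0.
  have -> : i = c0 (Ordinal Hi) by apply: ord_inj; rewrite ffunE.
  by rewrite Hr.
have Hj : i - t < k - t by have := ltn_ord i; lia.
have -> : i = pos (Ordinal Hj) by apply: ord_inj => /=; rewrite subnKC.
by rewrite shift_pos ffunE addrC subrK.
Qed.

Lemma cls_uniq w w' v : v \in cls w -> v \in cls w' -> w = w'.
Proof.
move=> /imsetP [r _ ->] /imsetP [r' _] /ffunP E.
have rr : r = r'.
  apply: (OA_uniq c0_inj) => m; have := E (c0 m).
  by rewrite !ffunE !shift_lt ?addr0 ?ffunE //; exact: (ltn_ord m).
rewrite -{}rr in E; apply/ffunP => j; have := E (pos j).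
by rewrite !ffunE !shift_pos => /addrI.
Qed.

Lemma vecOf_inj w : injective (vecOf w).
Proof.
move=> r r' /ffunP E; apply: (OA_uniq c0_inj) => m.
by have := E (c0 m); rewrite !ffunE => /addIr.
Qed.

Lemma cls_OA w (c : {ffun 'I_t -> 'I_k}) : injective c -> forall u : 'I_t -> 'I_G1,
  #|[set v in cls w | [forall m, v (c m) == u m]]| = 1.
Proof.
move=> ci u.
have -> : [set v in cls w | [forall m, v (c m) == u m]] =
   vecOf w @: [set r | [forall m, M r (c m) == (u m - shift w (c m))%R]].
  apply/setP => v; rewrite !inE; apply/andP/imsetP.
    move=> [/imsetP [r _ ->] /forallP H]; exists r => //.
    rewrite inE; apply/forallP => m; have := H m.
    by rewrite ffunE => /eqP <-; rewrite addrK.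
  move=> [r]; rewrite inE => /forallP H ->; split; first exact: imset_f.
  apply/forallP => m; rewrite ffunE; have := H m.
  by move/eqP ->; rewrite subrK.
by rewrite card_imset ?OA //; apply: vecOf_inj.
Qed.

End PA.
Section PB.
Variables (n' g' k : nat).
Local Notation n := n'.+1.
Local Notation G1 := g'.+1.
Definition PT : finType := ('I_n * 'I_G1)%type.

Definition grp (i : 'I_n) : {set PT} := [set x : PT | x.1 == i].
Definition Grp : {set {set PT}} := [set grp i | i : 'I_n].

Lemma transP S : transverse PT Grp S -> {in S &, injective fst}.
Proof.
move=> /forallP H x y xS yS Exy.
have /implyP := H (grp x.1).
rewrite imset_f // => /(_ isT) /card_le1_eqP; apply; by rewrite !inE ?Exy eqxx andbT.
Qed.

Lemma transI (S : {set PT}) : {in S &, injective (@fst 'I_n 'I_G1)} -> transverse PT Grp S.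
Proof.
move=> H; apply/forallP => X; apply/implyP => /imsetP [i _ ->].
apply/card_le1_eqP => a b; rewrite !inE => /andP [aS /eqP ai] /andP [bS /eqP bi].
by apply: H => //; rewrite ai bi.
Qed.

Lemma hgroups_PT : hgroups PT n G1 Grp.
Proof.
split; first by rewrite card_prod !card_ord.
split.
  apply/and3P; split.
  - apply/eqP/setP => x; rewrite inE; apply/bigcupP; exists (grp x.1).
      exact: imset_f.
    by rewrite inE.
  - apply/trivIsetP => A B /imsetP [i _ ->] /imsetP [j _ ->] Hij.
    rewrite disjoint_subset; apply/subsetP => x; rewrite !inE => /eqP xi.
    by apply/negP => /eqP xj; move: Hij; rewrite -xi -xj eqxx.
  - apply/imsetP => [[i _ E]].
    have : (i, ord0) \in grp i by rewrite inE.
    by rewrite -E inE.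
split.
  rewrite card_imset ?card_ord // => i j E.
  have : (i, ord0) \in grp j by rewrite -E inE.
  by rewrite inE => /eqP.
move=> X /imsetP [i _ ->].
have -> : grp i = [set (i, y) | y : 'I_G1].
  apply/setP => x; rewrite inE; apply/eqP/imsetP.
    by case: x => a b /= ->; exists b.
  by move=> [y _ ->].
by rewrite card_imset ?card_ord // => a b [].
Qed.

Definition dom (S : {set PT}) : {set 'I_n} := [set x.1 | x in S].

Lemma dom_card S : transverse PT Grp S -> #|dom S| = #|S|.
Proof. by move=> /transP H; rewrite card_in_imset. Qed.

Lemma dom_sub (S S' : {set PT}) : S \subset S' -> dom S \subset dom S'.
Proof. exact: imsetS. Qed.

Definition e (K : {set 'I_n}) (i : 'I_k) : 'I_n := nth ord0 (enum K) i.

Definition setOf (K : {set 'I_n}) (v : {ffun 'I_k -> 'I_G1}) : {set PT} :=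
  [set (e K i, v i) | i : 'I_k].

Section K.
Variables (K : {set 'I_n}) (hK : #|K| = k).

Lemma e_in i : e K i \in K.
Proof. by rewrite -mem_enum /e mem_nth // -cardE hK. Qed.

Lemma e_inj : injective (e K).
Proof.
move=> i j /eqP; rewrite /e nth_uniq ?enum_uniq // -?cardE ?hK //.
by move/eqP/ord_inj.
Qed.

Lemma e_surj x : x \in K -> exists i, e K i = x.
Proof.
move=> xK; have Hi : index x (enum K) < k by rewrite -hK cardE index_mem mem_enum.
by exists (Ordinal Hi); rewrite /e /= nth_index // mem_enum.
Qed.

Lemma setOf_card v : #|setOf K v| = k.
Proof. by rewrite card_imset ?card_ord // => i j [] /e_inj. Qed.

Lemma setOf_trans v : transverse PT Grp (setOf K v).
Proof.
apply: transI => x y /imsetP [i _ ->] /imsetP [j _ ->] /= /e_inj ->.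
by [].
Qed.

Lemma setOf_dom v : dom (setOf K v) = K.
Proof.
apply/setP => x; apply/imsetP/idP.
  by move=> [y /imsetP [i _ ->] ->]; exact: e_in.
move=> /e_surj [i <-]; exists (e K i, v i) => //; exact: imset_f.
Qed.

Lemma setOf_inj v v' : setOf K v = setOf K v' -> v = v'.
Proof.
move=> E; apply/ffunP => i.
have : (e K i, v i) \in setOf K v' by rewrite -E; exact: imset_f.
by move=> /imsetP [j _ [/e_inj -> ->]].
Qed.

End K.

Lemma setOf_surj b : transverse PT Grp b -> #|b| = k ->
  exists v, b = setOf (dom b) v.
Proof.
move=> tb cb; have hK : #|dom b| = k by rewrite dom_card.
have inj := transP tb.
exists [ffun i => odflt ord0 [pick y | (e (dom b) i, y) \in b]].
apply/setP => x; apply/idP/imsetP.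
  move=> xb; have [i Ei] : exists i, e (dom b) i = x.1.
    by apply: e_surj => //; exact: imset_f.
  exists i => //; rewrite ffunE; case: pickP => [y Hy|/(_ x.2)].
    have := inj _ _ Hy xb; rewrite Ei => /(_ erefl) <-.
    by [].
  by rewrite Ei -surjective_pairing xb.
move=> [i _ ->]; rewrite ffunE; case: pickP => [y Hy //|H].
have /imsetP [z zb Ez] := e_in hK i.
by have := H z.2; rewrite Ez -surjective_pairing zb.
Qed.

End PB.

Section PC.
Variables (n' g' k' t' : nat).
Local Notation n := n'.+1.
Local Notation G1 := g'.+1.
Local Notation k := k'.+1.
Local Notation t := t'.+1.
Hypothesis ht : t <= k.
Variable M : 'I_(G1 ^ t) -> 'I_k -> 'I_G1.
Hypothesis OA : orthogonal_array t k G1 M.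
Variable L : seq {set {set 'I_n}}.
Hypothesis hL : large_set_mult t k n (G1 ^ (k - t)) L.

Local Notation NL := (size L).
Definition Bj (j : 'I_NL) := nth set0 L j.
Definition J (K : {set 'I_n}) := [set j : 'I_NL | K \in Bj j].
Definition w0 : W t k g' := [ffun _ => ord0].
Definition wK (K : {set 'I_n}) (j : 'I_NL) : W t k g' :=
  nth w0 (enum [set: W t k g']) (index j (enum (J K))).

Lemma Bj_steiner j : steiner_system t k n (Bj j).
Proof. by apply: hL.1; rewrite mem_nth. Qed.

Lemma Bj_card j (K : {set 'I_n}) : K \in Bj j -> #|K| = k.
Proof. exact: (Bj_steiner j).1. Qed.

Lemma J_card (K : {set 'I_n}) : #|K| = k -> #|J K| = G1 ^ (k - t).
Proof. by move=> hK; rewrite /J /Bj (card_set_nth L (fun B : {set {set 'I_n}} => K \in B)); apply: hL.2. Qed.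

Lemma W_card : #|[set: W t k g']| = G1 ^ (k - t).
Proof. by rewrite cardsT card_ffun !card_ord. Qed.

Lemma wK_inj (K : {set 'I_n}) : #|K| = k -> {in J K &, injective (wK K)}.
Proof.
move=> hK j j' jJ j'J /eqP; rewrite /wK nth_uniq ?enum_uniq //; last first.
- by rewrite -cardE W_card -(J_card hK) cardE index_mem mem_enum.
- by rewrite -cardE W_card -(J_card hK) cardE index_mem mem_enum.
move/eqP => E.
have jm : j \in enum (J K) by rewrite mem_enum.
have j'm : j' \in enum (J K) by rewrite mem_enum.
by rewrite -(nth_index j jm) E nth_index.
Qed.

Lemma wK_surj (K : {set 'I_n}) : #|K| = k -> forall w, exists2 j, j \in J K & wK K j = w.
Proof.
move=> hK w.
have : wK K @: J K == [set: W t k g'].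
  rewrite eqEcard subsetT card_in_imset; last exact: wK_inj.
  by rewrite W_card J_card // leqnn.
move/eqP => E; have : w \in wK K @: J K by rewrite E inE.
by move=> /imsetP [j jJ ->]; exists j.
Qed.

Definition D (j : 'I_NL) : {set {set PT n' g'}} :=
  [set setOf K v | K in Bj j, v in cls M (wK K j)].

Lemma DP j b : reflect (exists K v, [/\ K \in Bj j, v \in cls M (wK K j) & b = setOf K v])
  (b \in D j).
Proof.
apply: (iffP imset2P).
  by move=> [K v KB vc ->]; exists K, v.
by move=> [K [v [KB vc ->]]]; exists K v.
Qed.

Lemma D_block j b : b \in D j -> #|b| = k /\ transverse (PT n' g') (Grp n' g') b.
Proof.
move=> /DP [K [v [KB _ ->]]]; have hK := Bj_card KB.
by split; [apply: setOf_card | apply: setOf_trans].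
Qed.

Lemma D_cover b : b \in transverse_ksets (PT n' g') k (Grp n' g') -> exists j, b \in D j.
Proof.
rewrite inE => /andP [/eqP cb tb].
have [v Ev] := setOf_surj tb cb.
have hK : #|dom b| = k by rewrite dom_card.
have [w vw] := cls_cover ht OA v.
have [j jJ Ej] := wK_surj hK w.
exists j; apply/DP; exists (dom b), v; split => //.
  by move: jJ; rewrite inE.
by rewrite Ej.
Qed.

Lemma D_disj j j' b : b \in D j -> b \in D j' -> j = j'.
Proof.
move=> /DP [K [v [KB vc Eb]]] /DP [K' [v' [KB' vc' Eb']]].
have hK := Bj_card KB; have hK' := Bj_card KB'.
have EK : K = K' by rewrite -(setOf_dom hK v) -(setOf_dom hK' v') -Eb -Eb'.
subst K'.
have Ev : v = v' by apply: (setOf_inj hK); rewrite -Eb -Eb'.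
subst v'.
have := cls_uniq ht OA vc vc'.
by apply: (wK_inj hK); rewrite inE.
Qed.

Lemma D_H j (S : {set PT n' g'}) : #|S| = t -> transverse (PT n' g') (Grp n' g') S ->
  #|[set b in D j | S \subset b]| = 1.
Proof.
move=> hS tS.
have hK0 : #|dom S| = t by rewrite dom_card.
have := (Bj_steiner j).2 _ hK0.
move/eqP/cards1P => [K HK].
have : K \in [set b in Bj j | dom S \subset b] by rewrite HK inE.
rewrite inE => /andP [KB K0K].
have hK := Bj_card KB.
pose sm (m : 'I_t) := nth (ord0, ord0) (enum S) m.
have smS m : sm m \in S by rewrite -mem_enum mem_nth // -cardE hS.
have sm1K m : (sm m).1 \in K.
  by apply: (subsetP K0K); apply: imset_f.
pose c : {ffun 'I_t -> 'I_k} := [ffun m => inord (index (sm m).1 (enum K))].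
have ec m : e K (c m) = (sm m).1.
  rewrite /e ffunE inordK ?nth_index ?mem_enum //.
  by rewrite -hK cardE index_mem mem_enum.
have ci : injective c.
  move=> m m' E; have := ec m; rewrite E ec => /(transP tS (smS _) (smS _)).
  move/eqP; rewrite /sm nth_uniq ?enum_uniq // -?cardE ?hS //.
  by move/eqP/ord_inj.
pose u (m : 'I_t) := (sm m).2.
have key v : (S \subset setOf K v) = [forall m, v (c m) == u m].
  apply/subsetP/forallP.
    move=> H m; have /imsetP [i _ Ei] := H _ (smS m).
    have Ei1 : (sm m).1 = e K i by rewrite Ei.
    rewrite -ec in Ei1; move/(e_inj hK): Ei1 => ->.
    by rewrite /u Ei.
  move=> H x xS.
  have xi : index x (enum S) < t by rewrite -hS cardE index_mem mem_enum.
  pose m : 'I_t := inord (index x (enum S)).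
  have smx : sm m = x by rewrite /sm inordK // nth_index // mem_enum.
  apply/imsetP; exists (c m) => //.
  by rewrite ec (eqP (H m)) /u smx -surjective_pairing.
have -> : [set b in D j | S \subset b] =
    setOf K @: [set v in cls M (wK K j) | [forall m, v (c m) == u m]].
  apply/setP => b; rewrite inE; apply/andP/imsetP.
    move=> [/DP [K' [v [KB' vc ->]]] Sb].
    have hK' := Bj_card KB'.
    have : K' \in [set b in Bj j | dom S \subset b].
      by rewrite inE KB' -(setOf_dom hK' v) dom_sub.
    rewrite HK inE => /eqP EK; subst K'.
    by exists v => //; rewrite inE vc -key.
  move=> [v]; rewrite inE => /andP [vc H] ->; split.
    by apply/DP; exists K, v.
  by rewrite key.
by rewrite card_imset ?(cls_OA ht OA) // => v v'; apply: setOf_inj.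
Qed.

Definition P := [set D j | j : 'I_NL] :\ set0.

Lemma main : large_set_H (PT n' g') n G1 k t (Grp n' g') P.
Proof.
split; first exact: hgroups_PT.
split.
  apply/and3P; split.
  - apply/eqP/setP => b; apply/bigcupP/idP.
      move=> [B]; rewrite !inE => /andP [_ /imsetP [j _ ->]] /D_block [cb tb].
      by rewrite cb eqxx tb.
    move=> /D_cover [j bD]; exists (D j) => //.
    rewrite !inE imset_f // andbT; apply/eqP => E; by rewrite E inE in bD.
  - apply/trivIsetP => A B.
    rewrite !inE => /andP [_ /imsetP [j _ ->]] /andP [_ /imsetP [j' _ ->]] Hne.
    rewrite disjoint_subset; apply/subsetP => b bj; rewrite inE; apply/negP => bj'.
    by move: Hne; rewrite (D_disj bj bj') eqxx.
  - by rewrite !inE eqxx.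
move=> B; rewrite !inE => /andP [_ /imsetP [j _ ->]].
split; first exact: hgroups_PT.
split; first exact: D_block.
move=> S hS tS; exact: D_H.
Qed.

End PC.

Theorem theorem5 (n g k t : nat) :
  0 < n -> 0 < g -> 0 < k -> 0 < t -> t <= k ->
  (exists M : 'I_(g ^ t) -> 'I_k -> 'I_g, orthogonal_array t k g M) ->
  (exists L : seq {set {set 'I_n}}, large_set_mult t k n (g ^ (k - t)) L) ->
  exists (T : finType) (G : {set {set T}}) (P : {set {set {set T}}}),
    large_set_H T n g k t G P.
Proof.
case: n => // n'; case: g => // g'; case: k => // k'; case: t => // t'.
move=> _ _ _ _ ht [M hM] [L hL].
exists (PT n' g'), (Grp n' g'), (P M L).
exact: main.
Qed.
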